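(* Let $S^0$ be an inverse semigroup with semilattice of idempotents $E^0$. Let $L$ be a left inverse semigroup and $R$ a right inverse semigroup and suppose that $S^0$ is a common quasi-ideal inverse transversal of $L$ and $R$; for $x$ in $L$ or $R$ let $x^0$ denote the unique inverse of $x$ lying in $S^0$. Let $R\times L\to S^0$ be a map denoted by $(a,x)\mapsto a\ast x$ and suppose that $\ast$ satisfies (1) for all $y,z\in L$, $a,b\in R$ with $y^0=b^0$, $(a\ast y)(b^0b)\ast z = a\ast (yy^0)(b\ast z)$; (2) if $a\in S^0$ or $x\in S^0$ then $a\ast x = ax$; (3) for all $e\in E(R)$, $f \in E(L)$, $e\ast f \in E^0$. Let $T = \{(x,a)\in L\times R : x^0 = a^0\}$ and define $(x,a)(y,b)=((xx^0)(a\ast y),(a\ast y)(b^0b))$. Then $T$ is a regular semigroup with a multiplicative inverse transversal $T^0$ with $T^0\cong S^0$. Moreover every regular semigroup with a multiplicative inverse transversal can be constructed (up to isomorphism) in this way.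
   Context: An inverse subsemigroup $S^0$ of a regular semigroup $S$ is an inverse transversal if each $x\in S$ has exactly one inverse $x^0$ in $S^0$; it is a quasi-ideal if $S^0SS^0\subseteq S^0$, and multiplicative if $\Lambda I\subseteq E^0$ where $I=\{xx^0:x\in S\}$ and $\Lambda=\{x^0x:x\in S\}$. A left (right) inverse semigroup is a regular semigroup whose idempotents form a left (right) regular band. *)

(* Defs.v *)
Set Implicit Arguments.

Section Generic.
Variables (X : Type) (op : X -> X -> X).

Definition full : X -> Prop := fun _ => True.

Definition closed_on (C : X -> Prop) : Prop :=
  forall x y, C x -> C y -> C (op x y).

Definition assoc_on (C : X -> Prop) : Prop :=
  forall x y z, C x -> C y -> C z -> op (op x y) z = op x (op y z).

Definition semigroup_on (C : X -> Prop) : Prop := closed_on C /\ assoc_on C.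

Definition inverse_of (x y : X) : Prop :=
  op (op x y) x = x /\ op (op y x) y = y.

Definition idem (e : X) : Prop := op e e = e.

Definition regular_on (C : X -> Prop) : Prop :=
  forall x, C x -> exists y, C y /\ op (op x y) x = x.

Definition inverse_sg_on (C : X -> Prop) : Prop :=
  semigroup_on C /\ forall x, C x -> exists! y, C y /\ inverse_of x y.

Definition inverse_transversal_on (C C0 : X -> Prop) : Prop :=
  (forall x, C0 x -> C x) /\ inverse_sg_on C0 /\
  forall x, C x -> exists! y, C0 y /\ inverse_of x y.

Definition quasi_ideal_on (C C0 : X -> Prop) : Prop :=
  forall a x b, C0 a -> C x -> C0 b -> C0 (op (op a x) b).

(** multiplicative : Lambda I is contained in E^0, where
    I = {x x^0}, Lambda = {x^0 x}, x^0 the inverse of x in C0 *)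
Definition multiplicative_on (C C0 : X -> Prop) : Prop :=
  forall x y x0 y0, C x -> C y -> C0 x0 -> C0 y0 ->
    inverse_of x x0 -> inverse_of y y0 ->
    C0 (op (op x0 x) (op y y0)) /\ idem (op (op x0 x) (op y y0)).

(** left / right inverse semigroups: regular semigroups whose idempotents form
    a left (resp. right) regular band *)
Definition left_inverse_sg : Prop :=
  semigroup_on full /\ regular_on full /\
  forall e f, idem e -> idem f -> idem (op e f) /\ op (op e f) e = op e f.

Definition right_inverse_sg : Prop :=
  semigroup_on full /\ regular_on full /\
  forall e f, idem e -> idem f -> idem (op e f) /\ op (op e f) e = op f e.

End Generic.

Definition img (A X : Type) (f : A -> X) : X -> Prop := fun x => exists a, f a = x.

Definition embedding (A X : Type) (opA : A -> A -> A) (opX : X -> X -> X)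
  (f : A -> X) : Prop :=
  (forall a b, f a = f b -> a = b) /\ (forall a b, f (opA a b) = opX (f a) (f b)).

Definition iso_onto (A X : Type) (opA : A -> A -> A) (opX : X -> X -> X)
  (C : X -> Prop) : Prop :=
  exists f : A -> X, embedding opA opX f /\ (forall a, C (f a)) /\
    (forall x, C x -> exists a, f a = x).

(** The data of the construction. S0 (type Z) is embedded in L via iL and in R
    via iR; zL x and zR a denote x^0 and a^0; star is the map R x L -> S0. *)
Definition construction_data (L R Z : Type)
  (opL : L -> L -> L) (opR : R -> R -> R) (opZ : Z -> Z -> Z)
  (iL : Z -> L) (iR : Z -> R) (zL : L -> Z) (zR : R -> Z)
  (star : R -> L -> Z) : Prop :=
  inverse_sg_on opZ (full (X:=Z)) /\
  left_inverse_sg opL /\ right_inverse_sg opR /\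
  embedding opZ opL iL /\ embedding opZ opR iR /\
  inverse_transversal_on opL (full (X:=L)) (img iL) /\
  quasi_ideal_on opL (full (X:=L)) (img iL) /\
  inverse_transversal_on opR (full (X:=R)) (img iR) /\
  quasi_ideal_on opR (full (X:=R)) (img iR) /\
  (forall x : L, inverse_of opL x (iL (zL x))) /\
  (forall a : R, inverse_of opR a (iR (zR a))) /\
  (forall (y z : L) (a b : R), zL y = zR b ->
     star (opR (iR (star a y)) (opR (iR (zR b)) b)) z =
     star a (opL (opL y (iL (zL y))) (iL (star b z)))) /\
  (forall (s : Z) (x : L), iL (star (iR s) x) = opL (iL s) x) /\
  (forall (a : R) (t : Z), iR (star a (iL t)) = opR a (iR t)) /\
  (forall (e : R) (f : L), idem opR e -> idem opL f -> idem opZ (star e f)).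

Definition Tset (L R Z : Type) (zL : L -> Z) (zR : R -> Z) : L * R -> Prop :=
  fun p => zL (fst p) = zR (snd p).

Definition Tmul (L R Z : Type) (opL : L -> L -> L) (opR : R -> R -> R)
  (iL : Z -> L) (iR : Z -> R) (zL : L -> Z) (zR : R -> Z)
  (star : R -> L -> Z) (p q : L * R) : L * R :=
  let (x, a) := p in let (y, b) := q in
  (opL (opL x (iL (zL x))) (iL (star a y)),
   opR (iR (star a y)) (opR (iR (zR b)) b)).

(* Main.v *)
Require Import Defs.
From Stdlib Require Import Setoid ClassicalEpsilon ProofIrrelevance.


Ltac tailv op asc H :=
  let H' := fresh H "t" in
  assert (H' := fun t => f_equal (fun z => op z t) H); cbv beta in H';
  repeat (setoid_rewrite asc in H').

Section InvSg.
Variables (X : Type) (op : X -> X -> X) (C : X -> Prop) (inv : X -> X).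
Local Infix "**" := op (at level 40, left associativity).
Hypothesis asc : forall x y z, (x ** y) ** z = x ** (y ** z).
Hypothesis Ccl : forall x y, C x -> C y -> C (x ** y).
Hypothesis invC : forall x, C x -> C (inv x).
Hypothesis invl : forall x, C x -> x ** (inv x ** x) = x.
Hypothesis invr : forall x, C x -> inv x ** (x ** inv x) = inv x.
Hypothesis invu : forall x y, C x -> C y -> x ** (y ** x) = x -> y ** (x ** y) = y -> y = inv x.

Lemma inv_inv x : C x -> inv (inv x) = x.
Proof. intro Hx. symmetry. apply invu; auto. Qed.

Lemma inv_idem e : C e -> e ** e = e -> inv e = e.
Proof. intros He Hee. symmetry; apply invu; auto; rewrite Hee; auto. Qed.

Lemma idem_idem_mul e f : C e -> C f -> e ** e = e -> f ** f = f -> (e ** f) ** (e ** f) = e ** f.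
Proof.
  intros He Hf Hee Hff.
  set (u := e ** f). set (v := inv u). set (w := f ** (v ** e)).
  assert (Cu : C u) by (apply Ccl; auto).
  assert (Cv : C v) by (apply invC; auto).
  assert (Cw : C w) by (unfold w; repeat apply Ccl; auto).
  assert (Hvuv := invr u Cu). fold v in Hvuv. unfold u in Hvuv. rewrite !asc in Hvuv.
  tailv op asc Hvuv. tailv op asc Hee. tailv op asc Hff.
  assert (Huvu := invl u Cu). fold v in Huvu. unfold u in Huvu. rewrite !asc in Huvu.
  assert (Hw : w = v).
  { unfold v. apply invu; auto; unfold w, u; rewrite !asc.
    - rewrite Hfft, Heet. exact Huvu.
    - rewrite Heet, Hfft. rewrite Hvuvt. reflexivity. }
  assert (Hvv : v ** v = v).
  { rewrite <- Hw at 1 2. unfold w. rewrite !asc. rewrite Hvuvt. fold w. exact Hw. }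
  assert (Hu : u = inv v) by (apply invu; auto; unfold u; rewrite !asc; assumption).
  assert (Hv : v = inv v) by (apply invu; auto; rewrite Hvv; auto).
  assert (u = v) by congruence. rewrite H. exact Hvv.
Qed.

Lemma idem_comm e f : C e -> C f -> e ** e = e -> f ** f = f -> e ** f = f ** e.
Proof.
  intros He Hf Hee Hff.
  assert (I1 := idem_idem_mul e f He Hf Hee Hff).
  assert (I2 := idem_idem_mul f e Hf He Hff Hee).
  rewrite !asc in I1, I2. tailv op asc Hee. tailv op asc Hff.
  assert (A : f ** e = inv (e ** f)).
  { apply invu; auto; rewrite !asc.
    - rewrite Hfft, Heet. exact I1.
    - rewrite Heet, Hfft. exact I2. }
  rewrite A. symmetry. apply inv_idem; auto. apply idem_idem_mul; auto.
Qed.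

Lemma idem_l x : C x -> (x ** inv x) ** (x ** inv x) = x ** inv x.
Proof. intro Hx. rewrite !asc, invr; auto. Qed.
Lemma idem_r x : C x -> (inv x ** x) ** (inv x ** x) = inv x ** x.
Proof. intro Hx. rewrite !asc, invl; auto. Qed.

Lemma comm4 a b c d t : C (a ** b) -> C (c ** d) -> (a ** b) ** (a ** b) = a ** b ->
  (c ** d) ** (c ** d) = c ** d -> a ** (b ** (c ** (d ** t))) = c ** (d ** (a ** (b ** t))).
Proof. intros. transitivity (((a ** b) ** (c ** d)) ** t). rewrite !asc; reflexivity.
  rewrite (idem_comm (a ** b) (c ** d)); auto. rewrite !asc; reflexivity. Qed.

Lemma inv_mul x y : C x -> C y -> inv (x ** y) = inv y ** inv x.
Proof.
  intros Hx Hy. symmetry.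
  assert (H1 := invl x Hx). tailv op asc H1.
  assert (H2 := invl y Hy). tailv op asc H2.
  assert (H3 := invr x Hx). tailv op asc H3.
  assert (H4 := invr y Hy). tailv op asc H4.
  apply invu; auto; rewrite !asc.
  - rewrite (comm4 y (inv y) (inv x) x); auto using idem_l, idem_r.
    rewrite H1t, H2. reflexivity.
  - rewrite (comm4 (inv x) x y (inv y)); auto using idem_l, idem_r.
    rewrite H4t, H3. reflexivity.
Qed.
End InvSg.

Section P2.
Variables (S : Type) (op : S -> S -> S) (S0 : S -> Prop) (o : S -> S).
Local Infix "**" := op (at level 40, left associativity).
Hypothesis asc : forall x y z, (x ** y) ** z = x ** (y ** z).
Hypothesis S0cl : forall x y, S0 x -> S0 y -> S0 (x ** y).
Hypothesis oS0 : forall x, S0 (o x).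
Hypothesis ol : forall x, x ** (o x ** x) = x.
Hypothesis or : forall x, o x ** (x ** o x) = o x.
Hypothesis ou : forall x y, S0 y -> x ** (y ** x) = x -> y ** (x ** y) = y -> y = o x.
Hypothesis mult : forall x y, S0 (o x ** (x ** (y ** o y))).
Hypothesis multi : forall x y, (o x ** (x ** (y ** o y))) ** (o x ** (x ** (y ** o y))) = o x ** (x ** (y ** o y)).

Definition lam x := x ** (o x ** o (o x)).
Definition rho x := o (o x) ** (o x ** x).

Lemma olt x t : x ** (o x ** (x ** t)) = x ** t.
Proof. rewrite <- (asc (o x)), <- asc, ol. reflexivity. Qed.
Lemma ort x t : o x ** (x ** (o x ** t)) = o x ** t.
Proof. rewrite <- (asc x), <- asc, or. reflexivity. Qed.

Lemma ooo x : o (o (o x)) = o x.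
Proof. apply (inv_inv S op S0 o); auto. Qed.

Lemma o_S0idem s : S0 s -> s ** s = s -> o s = s.
Proof. intros. apply (inv_idem S op S0 o); auto. Qed.

Lemma inv_mulS x y : S0 x -> S0 y -> o (x ** y) = o y ** o x.
Proof. intros. apply (inv_mul S op S0 o); auto. Qed.

Lemma oo_s s : S0 s -> o (o s) = s.
Proof. intros. apply (inv_inv S op S0 o); auto. Qed.

Lemma c4 a b c d t : S0 (a ** b) -> S0 (c ** d) -> (a ** b) ** (a ** b) = a ** b ->
  (c ** d) ** (c ** d) = c ** d -> a ** (b ** (c ** (d ** t))) = c ** (d ** (a ** (b ** t))).
Proof. intros. apply (comm4 S op S0 o); auto. Qed.

Lemma c2 a b : S0 a -> S0 b -> a ** a = a -> b ** b = b -> a ** b = b ** a.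
Proof. intros. apply (idem_comm S op S0 o); auto. Qed.

Lemma idl x : S0 x -> (x ** o x) ** (x ** o x) = x ** o x.
Proof. intros. apply (idem_l S op S0 o); auto. Qed.
Lemma idr x : S0 x -> (o x ** x) ** (o x ** x) = o x ** x.
Proof. intros. apply (idem_r S op S0 o); auto. Qed.


Lemma o_idem e : e ** e = e -> o e ** o e = o e.
Proof.
  intro He.
  assert (E : o e = o e ** (e ** (e ** o e))) by (rewrite <- (asc e e), He, or; reflexivity).
  rewrite E. apply multi.
Qed.

Lemma G1 x y : o (x ** y) = o (o x ** (x ** y)) ** o x.
Proof.
  set (u := o x ** (x ** y)). symmetry. apply ou.
  - apply S0cl; auto.
  - transitivity (x ** (u ** (o u ** u))).
    + unfold u. rewrite !asc. rewrite olt. reflexivity.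
    + rewrite ol. unfold u. apply olt.
  - transitivity (o u ** (u ** (o u ** o x))).
    + unfold u. rewrite !asc. reflexivity.
    + apply ort.
Qed.

Lemma G2 x y : o (x ** y) = o y ** o (x ** (y ** o y)).
Proof.
  set (v := x ** (y ** o y)). symmetry. apply ou.
  - apply S0cl; auto.
  - transitivity (v ** (o v ** (v ** y))).
    + unfold v. rewrite !asc. rewrite (ol y). reflexivity.
    + rewrite olt. unfold v. rewrite !asc, ol. reflexivity.
  - transitivity (o y ** (o v ** (v ** o v))).
    + unfold v. rewrite !asc. reflexivity.
    + rewrite or. reflexivity.
Qed.

Lemma oxy x y : o (x ** y) = o y ** (o x ** (x ** (y ** (o y ** o x)))).
Proof.
  rewrite G1.
  replace (o x ** (x ** y)) with ((o x ** x) ** y) by apply asc.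
  rewrite G2. rewrite !asc. rewrite (o_S0idem (o x ** (x ** (y ** o y)))); auto.
  rewrite !asc. reflexivity.
Qed.

Lemma sz s z : S0 s -> s ** (z ** o z) = s ** (o (o z) ** o z).
Proof.
  intro Hs.
  set (D := o s ** (s ** (z ** o z))).
  set (D' := o s ** (s ** (o (o z) ** o z))).
  assert (SD : S0 D) by apply mult.
  assert (ID : D ** D = D) by apply multi.
  assert (SF : S0 (o s ** s)) by auto.
  assert (IF : (o s ** s) ** (o s ** s) = o s ** s) by (apply idr; auto).
  assert (Sk : S0 (o (o z) ** o z)) by auto.
  assert (Ik : (o (o z) ** o z) ** (o (o z) ** o z) = o (o z) ** o z) by (apply idr; auto).
  assert (SD' : S0 D') by (unfold D'; rewrite <- asc; auto).
  assert (ID' : D' ** D' = D').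
  { unfold D'. rewrite !asc. rewrite (c4 (o (o z)) (o z) (o s) s); auto.
    rewrite olt, (ol (o z)). reflexivity. }
  assert (DF : D ** (o s ** s) = D).
  { rewrite (c2 D (o s ** s)); auto. unfold D. rewrite !asc, olt. reflexivity. }
  assert (DD' : D ** D' = D).
  { transitivity ((D ** (o s ** s)) ** (o (o z) ** o z)). unfold D'. rewrite !asc. reflexivity.
    rewrite DF. unfold D. rewrite !asc. rewrite (ol (o z)). reflexivity. }
  assert (D'D : D' ** D = D').
  { unfold D, D'. rewrite !asc. rewrite (c4 (o (o z)) (o z) (o s) s); auto.
    rewrite olt, (or z). reflexivity. }
  assert (E : D = D') by (rewrite <- DD', (c2 D D'); auto).
  transitivity (s ** D). unfold D. rewrite olt. reflexivity.
  rewrite E. unfold D'. rewrite olt. reflexivity.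
Qed.

Lemma sL s z : S0 s -> lam z = z -> s ** z = s ** o (o z).
Proof.
  intros Hs Hz. rewrite <- Hz at 1. unfold lam.
  rewrite <- (asc z), <- asc, sz; auto. rewrite !asc. rewrite (or (o z)). reflexivity.
Qed.

Lemma oll l : lam l = l -> o l ** l = o l ** o (o l).
Proof. intro Hl. rewrite <- Hl at 2. unfold lam. apply ort. Qed.

Lemma ollt l t : lam l = l -> o l ** (l ** t) = o l ** (o (o l) ** t).
Proof. intro Hl. rewrite <- asc, oll, asc; auto. Qed.

Lemma LL l m : lam l = l -> lam m = m -> l ** m = l ** o (o m).
Proof.
  intros Hl Hm. rewrite <- Hl at 1. unfold lam. rewrite !asc.
  rewrite <- (asc (o l)), (sL (o l ** o (o l)) m); auto. rewrite !asc.
  transitivity (lam l ** o (o m)). unfold lam; rewrite !asc; reflexivity. rewrite Hl; reflexivity.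
Qed.

Lemma lam_S0 s : S0 s -> lam s = s.
Proof. intro Hs. unfold lam. rewrite oo_s; auto. Qed.

Lemma Lst l t : lam l = l -> S0 t -> o (l ** t) = o t ** o l.
Proof.
  intros Hl Ht. symmetry. apply ou; auto; rewrite !asc.
  - rewrite ollt; auto. rewrite (c4 t (o t) (o l) (o (o l))); auto using idl.
    rewrite (ol t).
    transitivity (lam l ** t). unfold lam; rewrite !asc; reflexivity. rewrite Hl; reflexivity.
  - rewrite ollt; auto. rewrite (c4 (o l) (o (o l)) t (o t)); auto using idl.
    rewrite ort. rewrite (ol (o l)). reflexivity.
Qed.

Lemma o_lam x : o (lam x) = o x.
Proof.
  symmetry. apply ou; auto; unfold lam; rewrite !asc.
  - rewrite (olt (o x)). rewrite olt. reflexivity.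
  - rewrite ort. rewrite (ol (o x)). reflexivity.
Qed.

Lemma lam_lam x : lam (lam x) = lam x.
Proof. unfold lam at 1. rewrite o_lam. unfold lam. rewrite !asc. rewrite (olt (o x)). reflexivity. Qed.

Lemma lam_L l m : lam l = l -> lam m = m -> lam (l ** m) = l ** m.
Proof.
  intros Hl Hm. rewrite (LL l m); auto. unfold lam at 1.
  rewrite Lst; auto. rewrite inv_mulS; auto. rewrite (oo_s (o (o m))); auto.
  rewrite !asc. rewrite (c4 (o (o m)) (o (o (o m))) (o l) (o (o l))); auto using idl.
  rewrite (ol (o (o m))).
  transitivity (lam l ** o (o m)). unfold lam; rewrite !asc; reflexivity. rewrite Hl; reflexivity.
Qed.

Lemma lam_mul x y : lam (x ** y) = x ** lam y.
Proof.
  unfold lam at 1. rewrite oxy.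
  set (E := o x ** (x ** (y ** o y))).
  assert (SE : S0 E) by apply mult.
  assert (IE : E ** E = E) by apply multi.
  replace (o y ** (o x ** (x ** (y ** (o y ** o x))))) with (o y ** (E ** o x)) by (unfold E; rewrite !asc; reflexivity).
  rewrite (inv_mulS (o y)); auto. rewrite (inv_mulS E); auto. rewrite (o_S0idem E); auto.
  assert (H1 : E ** (o x ** (o (o x) ** (E ** o (o y)))) = E ** o (o y)).
  { assert (P : (o x ** o (o x)) ** E = E) by (unfold E; rewrite !asc, (olt (o x)); reflexivity).
    transitivity (E ** (((o x ** o (o x)) ** E) ** o (o y))). rewrite !asc; reflexivity.
    rewrite P, <- asc, IE. reflexivity. }
  transitivity (x ** (y ** (o y ** (E ** (o x ** (o (o x) ** (E ** o (o y)))))))).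
  { rewrite !asc. reflexivity. }
  rewrite H1. unfold E. rewrite !asc.
  rewrite <- (olt x (y ** _)).
  assert (H2 := multi x y). rewrite !asc in H2. tailv op asc H2. rewrite H2t.
  rewrite olt. unfold lam. reflexivity.
Qed.

Lemma RL_S0 a x : rho a = a -> lam x = x -> S0 (a ** x).
Proof.
  intros Ha Hx. rewrite <- Ha, <- Hx. unfold rho, lam. rewrite !asc.
  replace (o (o a) ** (o a ** (a ** (x ** (o x ** o (o x))))))
    with (o (o a) ** ((o a ** (a ** (x ** o x))) ** o (o x))) by (rewrite !asc; reflexivity).
  auto.
Qed.

Lemma decomp x : x = lam x ** (o x ** rho x).
Proof. unfold lam, rho. rewrite !asc. rewrite (olt (o x)), (olt (o x)), ol. reflexivity. Qed.

Lemma hom1 x y : lam x ** (o (lam x) ** (rho x ** lam y)) = lam (x ** y).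
Proof.
  rewrite o_lam, lam_mul. unfold lam, rho. rewrite !asc.
  rewrite (olt (o x)), (olt (o x)), olt. reflexivity. Qed.
End P2.

Lemma EL (S : Type) (op : S -> S -> S) (S0 : S -> Prop) (o : S -> S) (asc : forall x y z : S, op (op x y) z = op x (op y z))
  (oS0 : forall x, S0 (o x)) (ol : forall x, op x (op (o x) x) = x) (or : forall x, op (o x) (op x (o x)) = o x)
  (ou : forall x y, S0 y -> op x (op y x) = x -> op y (op x y) = y -> y = o x)
  (multi : forall x y, op (op (o x) (op x (op y (o y)))) (op (o x) (op x (op y (o y)))) = op (o x) (op x (op y (o y))))
  f : lam S op o f = f -> op f f = f -> f = op f (o f).
Proof.
  intros Hf Hff. rewrite <- Hf at 1. unfold lam.
  rewrite (o_S0idem S op S0 o ou (o f)); auto.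
  - rewrite (o_idem S op o asc or multi f Hff). reflexivity.
  - apply (o_idem S op o asc or multi f Hff).
Qed.

Section P2m.
Variables (S : Type) (op : S -> S -> S) (S0 : S -> Prop) (o : S -> S).
Local Infix "**" := op (at level 40, left associativity).
Local Notation op' := (fun a b => op b a).
Hypothesis asc : forall x y z, (x ** y) ** z = x ** (y ** z).
Hypothesis S0cl : forall x y, S0 x -> S0 y -> S0 (x ** y).
Hypothesis oS0 : forall x, S0 (o x).
Hypothesis ol : forall x, x ** (o x ** x) = x.
Hypothesis or : forall x, o x ** (x ** o x) = o x.
Hypothesis ou : forall x y, S0 y -> x ** (y ** x) = x -> y ** (x ** y) = y -> y = o x.
Hypothesis mult : forall x y, S0 (o x ** (x ** (y ** o y))).
Hypothesis multi : forall x y, (o x ** (x ** (y ** o y))) ** (o x ** (x ** (y ** o y))) = o x ** (x ** (y ** o y)).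

Lemma asc' : forall x y z, op' (op' x y) z = op' x (op' y z).
Proof. intros; simpl; symmetry; apply asc. Qed.
Lemma S0cl' : forall x y, S0 x -> S0 y -> S0 (op' x y).
Proof. intros; simpl; auto. Qed.
Lemma ol' : forall x, op' x (op' (o x) x) = x.
Proof. intros; simpl. rewrite asc; auto. Qed.
Lemma or' : forall x, op' (o x) (op' x (o x)) = o x.
Proof. intros; simpl. rewrite asc; auto. Qed.
Lemma ou' : forall x y, S0 y -> op' x (op' y x) = x -> op' y (op' x y) = y -> y = o x.
Proof. simpl; intros. apply ou; auto; rewrite <- asc; auto. Qed.
Lemma mult' : forall x y, S0 (op' (o x) (op' x (op' y (o y)))).
Proof. simpl; intros. rewrite !asc. auto. Qed.
Lemma multi' : forall x y, op' (op' (o x) (op' x (op' y (o y)))) (op' (o x) (op' x (op' y (o y)))) = op' (o x) (op' x (op' y (o y))).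
Proof. simpl; intros. rewrite !asc. assert (H := multi y x). rewrite !asc in H. exact H. Qed.

Ltac mfill H := repeat (specialize (H ltac:(first [exact asc' | exact S0cl' | exact oS0 | exact ol' | exact or' | exact ou' | exact mult' | exact multi']))).

Lemma rho_l x : rho S op o x = lam S op' o x.
Proof. unfold rho, lam. rewrite asc. reflexivity. Qed.

Lemma o_rho x : o (rho S op o x) = o x.
Proof. rewrite rho_l. assert (H := o_lam S op' S0 o). mfill H. apply H. Qed.

Ltac mn := unfold lam, rho in *; cbv beta in *; rewrite ?asc in *.

Lemma rho_rho x : rho S op o (rho S op o x) = rho S op o x.
Proof. rewrite !rho_l. assert (H := lam_lam S op' S0 o). mfill H. apply H. Qed.

Lemma rho_S0 s : S0 s -> rho S op o s = s.
Proof. rewrite !rho_l. assert (H := lam_S0 S op' S0 o). mfill H. apply H. Qed.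

Lemma rho_R a b : rho S op o a = a -> rho S op o b = b -> rho S op o (a ** b) = a ** b.
Proof. intros Ha Hb. assert (H := lam_L S op' S0 o). mfill H. specialize (H b a). mn. apply H; auto. Qed.

Lemma rho_mul x y : rho S op o (x ** y) = rho S op o x ** y.
Proof. assert (H := lam_mul S op' S0 o). mfill H. specialize (H y x). mn. apply H. Qed.

Lemma sR s z : S0 s -> rho S op o z = z -> z ** s = o (o z) ** s.
Proof. intros Hs Hz. assert (H := sL S op' S0 o). mfill H. specialize (H s z). mn. apply H; auto. Qed.

Lemma oRR r : rho S op o r = r -> r ** o r = o (o r) ** o r.
Proof. intros Hr. assert (H := oll S op' o). mfill H. specialize (H r). mn. apply H; auto. Qed.

Lemma RR a b : rho S op o a = a -> rho S op o b = b -> a ** b = o (o a) ** b.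
Proof. intros Ha Hb. assert (H := LL S op' S0 o). mfill H. specialize (H b a). mn. apply H; auto. Qed.

Lemma hom2 x y : (rho S op o x ** lam S op o y) ** (o (rho S op o y) ** rho S op o y) = rho S op o (x ** y).
Proof. assert (H := hom1 S op' S0 o). mfill H. specialize (H y x). rewrite <- rho_l in H. rewrite o_rho. rewrite o_rho in H. mn. exact H. Qed.

Lemma ER e : rho S op o e = e -> e ** e = e -> e = o e ** e.
Proof. intros He Hee. assert (H := EL S op' S0 o). mfill H. specialize (H e). mn. apply H; auto. Qed.
End P2m.

Section P2b.
Variables (S : Type) (op : S -> S -> S) (S0 : S -> Prop) (o : S -> S).
Local Infix "**" := op (at level 40, left associativity).
Hypothesis asc : forall x y z, (x ** y) ** z = x ** (y ** z).
Hypothesis S0cl : forall x y, S0 x -> S0 y -> S0 (x ** y).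
Hypothesis oS0 : forall x, S0 (o x).
Hypothesis ol : forall x, x ** (o x ** x) = x.
Hypothesis or : forall x, o x ** (x ** o x) = o x.
Hypothesis ou : forall x y, S0 y -> x ** (y ** x) = x -> y ** (x ** y) = y -> y = o x.
Hypothesis mult : forall x y, S0 (o x ** (x ** (y ** o y))).
Hypothesis multi : forall x y, (o x ** (x ** (y ** o y))) ** (o x ** (x ** (y ** o y))) = o x ** (x ** (y ** o y)).
Local Notation lam := (lam S op o).
Local Notation rho := (rho S op o).

Lemma ER_EL e f : rho e = e -> e ** e = e -> lam f = f -> f ** f = f -> S0 (e ** f) /\ (e ** f) ** (e ** f) = e ** f.
Proof.
  intros He Hee Hf Hff.
  rewrite (ER S op S0 o asc oS0 ol or ou multi e), (EL S op S0 o asc oS0 ol or ou multi f); auto.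
  rewrite !asc. split; [apply mult | ]. assert (H := multi e f). rewrite !asc in H. exact H.
Qed.

Lemma oidS0 l : l ** l = l -> o (o l) = o l.
Proof. intro. apply (o_S0idem S op S0 o ou); auto. apply (o_idem S op o asc or multi); auto. Qed.

Lemma LRB l m : lam l = l -> lam m = m -> l ** l = l -> m ** m = m ->
  (l ** m) ** (l ** m) = l ** m /\ (l ** m) ** l = l ** m.
Proof.
  intros Hl Hm Hll Hmm.
  assert (El := EL S op S0 o asc oS0 ol or ou multi l Hl Hll).
  assert (Iol := o_idem S op o asc or multi l Hll).
  assert (Iom := o_idem S op o asc or multi m Hmm).
  assert (Hlm : l ** m = l ** o m).
  { rewrite (LL S op S0 o asc S0cl oS0 ol or ou mult multi l m); auto. rewrite oidS0; auto. }
  assert (Hml : o m ** l = o m ** o l).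
  { rewrite (sL S op S0 o asc S0cl oS0 ol or ou mult multi (o m) l); auto. rewrite oidS0; auto. }
  assert (C := c2 S op S0 o asc S0cl oS0 ol or ou (o m) (o l) (oS0 m) (oS0 l) Iom Iol).
  assert (Ct : forall t, o m ** (o l ** t) = o l ** (o m ** t)) by (intro; rewrite <- !asc, C; reflexivity).
  assert (Hmlt : forall t, o m ** (l ** t) = o m ** (o l ** t)) by (intro; rewrite <- !asc, Hml; reflexivity).
  assert (Elt : forall t, l ** (o l ** t) = l ** t) by (intro; rewrite <- asc, <- El; reflexivity).
  assert (Iomt : forall t, o m ** (o m ** t) = o m ** t) by (intro; rewrite <- asc, Iom; reflexivity).
  rewrite Hlm. rewrite !asc. split.
  - rewrite Hmlt, Ct, Elt, Iom. reflexivity.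
  - rewrite Hml, C, Elt. reflexivity.
Qed.

Lemma surjL l r : lam l = l -> rho r = r -> o l = o r ->
  lam (l ** (o l ** r)) = l /\ rho (l ** (o l ** r)) = r.
Proof.
  intros Hl Hr Hlr.
  set (g := o l).
  assert (Hgl : forall t, g ** (l ** t) = g ** (o g ** t)).
  { intro t. unfold g. rewrite <- asc, (oll S op o asc or l Hl), asc. reflexivity. }
  assert (Hrg : forall t, r ** (g ** t) = o g ** (g ** t)).
  { intro t. unfold g. rewrite Hlr, <- asc, (oRR S op o asc or r Hr), asc. reflexivity. }
  assert (Hrg0 : r ** g = o g ** g).
  { unfold g. rewrite Hlr. apply (oRR S op o asc or r Hr). }
  assert (Hox : o (l ** (g ** r)) = g).
  { symmetry. apply ou; [unfold g; auto | | ]; rewrite !asc.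
    - rewrite Hrg, olt, Hgl, olt; auto. 
    - rewrite Hgl, olt; auto. rewrite Hrg0. apply ol. }
  split.
  - unfold lam at 1. rewrite Hox. rewrite !asc. rewrite Hrg, (or g). exact Hl.
  - unfold rho at 1. rewrite Hox. rewrite Hgl, (ort S op o asc or g).
    rewrite <- Hr at 2. unfold rho. rewrite <- Hlr. reflexivity.
Qed.
End P2b.

Section P2bm.
Variables (S : Type) (op : S -> S -> S) (S0 : S -> Prop) (o : S -> S).
Local Infix "**" := op (at level 40, left associativity).
Local Notation op' := (fun a b => op b a).
Hypothesis asc : forall x y z, (x ** y) ** z = x ** (y ** z).
Hypothesis S0cl : forall x y, S0 x -> S0 y -> S0 (x ** y).
Hypothesis oS0 : forall x, S0 (o x).
Hypothesis ol : forall x, x ** (o x ** x) = x.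
Hypothesis or : forall x, o x ** (x ** o x) = o x.
Hypothesis ou : forall x y, S0 y -> x ** (y ** x) = x -> y ** (x ** y) = y -> y = o x.
Hypothesis mult : forall x y, S0 (o x ** (x ** (y ** o y))).
Hypothesis multi : forall x y, (o x ** (x ** (y ** o y))) ** (o x ** (x ** (y ** o y))) = o x ** (x ** (y ** o y)).

Lemma RRB a b : rho S op o a = a -> rho S op o b = b -> a ** a = a -> b ** b = b ->
  (a ** b) ** (a ** b) = a ** b /\ (a ** b) ** a = b ** a.
Proof.
  intros Ha Hb Haa Hbb.
  assert (A1 := asc' S op asc). assert (A2 := S0cl' S op S0 S0cl). assert (A3 := ol' S op o asc ol).
  assert (A4 := or' S op o asc or). assert (A5 := ou' S op S0 o asc ou). assert (A6 := mult' S op S0 o asc mult).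
  assert (A7 := multi' S op o asc multi).
  split.
  - assert (H := LRB S op' S0 o A1 A2 oS0 A3 A4 A5 A6 A7 b a). rewrite <- !rho_l in H; auto.
    cbv beta in H. destruct H as [H _]; auto.
  - assert (H := LRB S op' S0 o A1 A2 oS0 A3 A4 A5 A6 A7 a b). rewrite <- !rho_l in H; auto.
    cbv beta in H. destruct H as [_ H]; auto. rewrite asc. apply H; auto.
Qed.
End P2bm.


Lemma sig_eq (A : Type) (P : A -> Prop) (p q : {x : A | P x}) : proj1_sig p = proj1_sig q -> p = q.
Proof. destruct p as [x Hx], q as [y Hy]; simpl; intro E; subst; f_equal; apply proof_irrelevance. Qed.

Section Build.
Variables (S : Type) (op : S -> S -> S) (S0 : S -> Prop) (o : S -> S).
Local Infix "**" := op (at level 40, left associativity).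
Hypothesis asc : forall x y z, (x ** y) ** z = x ** (y ** z).
Hypothesis S0cl : forall x y, S0 x -> S0 y -> S0 (x ** y).
Hypothesis oS0 : forall x, S0 (o x).
Hypothesis ol : forall x, x ** (o x ** x) = x.
Hypothesis or : forall x, o x ** (x ** o x) = o x.
Hypothesis ou : forall x y, S0 y -> x ** (y ** x) = x -> y ** (x ** y) = y -> y = o x.
Hypothesis mult : forall x y, S0 (o x ** (x ** (y ** o y))).
Hypothesis multi : forall x y, (o x ** (x ** (y ** o y))) ** (o x ** (x ** (y ** o y))) = o x ** (x ** (y ** o y)).
Local Notation lam := (lam S op o).
Local Notation rho := (rho S op o).

Ltac fS H := repeat (specialize (H ltac:(first [exact asc | exact S0cl | exact oS0 | exact ol | exact or | exact ou | exact mult | exact multi]))).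
Ltac useS L := let H := fresh in assert (H := L S op S0 o); fS H; intros; eapply H; eauto.
Ltac useS' L := let H := fresh in assert (H := L S op o); fS H; intros; eapply H; eauto.

Lemma b_lamL l m : lam l = l -> lam m = m -> lam (l ** m) = l ** m. Proof. useS lam_L. Qed.
Lemma b_rhoR l m : rho l = l -> rho m = m -> rho (l ** m) = l ** m. Proof. useS rho_R. Qed.
Lemma b_lamS0 s : S0 s -> lam s = s. Proof. useS lam_S0. Qed.
Lemma b_rhoS0 s : S0 s -> rho s = s. Proof. useS rho_S0. Qed.
Lemma b_lamlam x : lam (lam x) = lam x. Proof. useS lam_lam. Qed.
Lemma b_rhorho x : rho (rho x) = rho x. Proof. useS rho_rho. Qed.
Lemma b_olam x : o (lam x) = o x. Proof. useS o_lam. Qed.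
Lemma b_orho x : o (rho x) = o x. Proof. useS o_rho. Qed.
Lemma b_RL a x : rho a = a -> lam x = x -> S0 (a ** x). Proof. useS RL_S0. Qed.
Lemma b_sL s z : S0 s -> lam z = z -> s ** z = s ** o (o z). Proof. useS sL. Qed.
Lemma b_sR s z : S0 s -> rho z = z -> z ** s = o (o z) ** s. Proof. useS sR. Qed.
Lemma b_hom1 x y : lam x ** (o (lam x) ** (rho x ** lam y)) = lam (x ** y). Proof. useS hom1. Qed.
Lemma b_hom2 x y : (rho x ** lam y) ** (o (rho y) ** rho y) = rho (x ** y). Proof. useS hom2. Qed.
Lemma b_decomp x : x = lam x ** (o x ** rho x). Proof. useS' decomp. Qed.
Lemma b_ER_EL e f : rho e = e -> e ** e = e -> lam f = f -> f ** f = f -> S0 (e ** f) /\ (e ** f) ** (e ** f) = e ** f. Proof. useS ER_EL. Qed.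
Lemma b_LRB l m : lam l = l -> lam m = m -> l ** l = l -> m ** m = m ->
  (l ** m) ** (l ** m) = l ** m /\ (l ** m) ** l = l ** m. Proof. useS LRB. Qed.
Lemma b_RRB a b : rho a = a -> rho b = b -> a ** a = a -> b ** b = b ->
  (a ** b) ** (a ** b) = a ** b /\ (a ** b) ** a = b ** a. Proof. useS RRB. Qed.
Lemma b_surj l r : lam l = l -> rho r = r -> o l = o r ->
  lam (l ** (o l ** r)) = l /\ rho (l ** (o l ** r)) = r. Proof. useS surjL. Qed.

Lemma olA x : (x ** o x) ** x = x. Proof. rewrite asc; auto. Qed.
Lemma orA x : (o x ** x) ** o x = o x. Proof. rewrite asc; auto. Qed.

Definition Zt := {s : S | S0 s}.
Definition opZ (p q : Zt) : Zt := exist _ (proj1_sig p ** proj1_sig q) (S0cl _ _ (proj2_sig p) (proj2_sig q)).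

Lemma Z_inv : inverse_sg_on opZ (full (X:=Zt)).
Proof.
  split; [split | ].
  - intros x y _ _; exact I.
  - intros x y z _ _ _; apply sig_eq; simpl; apply asc.
  - intros x _. exists (exist _ (o (proj1_sig x)) (oS0 _)). split.
    + split; [exact I | split; apply sig_eq; simpl; [apply olA | apply orA]].
    + intros y [_ [H1 H2]]. apply (f_equal (@proj1_sig _ _)) in H1, H2. simpl in H1, H2.
      apply sig_eq; simpl. symmetry. apply ou; [exact (proj2_sig y) | rewrite <- asc; auto | rewrite <- asc; auto].
Qed.

Section Sub.
Variable P : S -> Prop.
Hypothesis Pcl : forall x y, P x -> P y -> P (x ** y).
Hypothesis PS0 : forall s, S0 s -> P s.
Hypothesis Pq : forall s x t, S0 s -> P x -> S0 t -> S0 (s ** x ** t).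

Definition SubT := {x : S | P x}.
Definition opP (p q : SubT) : SubT := exist _ (proj1_sig p ** proj1_sig q) (Pcl _ _ (proj2_sig p) (proj2_sig q)).
Definition iP (s : Zt) : SubT := exist _ (proj1_sig s) (PS0 _ (proj2_sig s)).
Definition zP (p : SubT) : Zt := exist _ (o (proj1_sig p)) (oS0 _).

Lemma sub_emb : embedding opZ opP iP.
Proof.
  split.
  - intros a b H. apply (f_equal (@proj1_sig _ _)) in H. apply sig_eq. exact H.
  - intros a b. apply sig_eq. reflexivity.
Qed.

Lemma sub_inv x : inverse_of opP x (iP (zP x)).
Proof. split; apply sig_eq; simpl; [apply olA | apply orA]. Qed.

Lemma sub_sg : semigroup_on opP (full (X:=SubT)) /\ regular_on opP (full (X:=SubT)).
Proof.
  split; [split|].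
  - intros x y _ _; exact I.
  - intros x y z _ _ _; apply sig_eq; simpl; apply asc.
  - intros x _. exists (iP (zP x)). split; [exact I | apply sub_inv].
Qed.

Lemma sub_uniq x y : inverse_of opP x (iP y) -> y = zP x.
Proof.
  intros [H1 H2]. apply (f_equal (@proj1_sig _ _)) in H1, H2. simpl in H1, H2.
  apply sig_eq; simpl. apply ou; [exact (proj2_sig y) | rewrite <- asc; auto | rewrite <- asc; auto].
Qed.

Lemma sub_it : inverse_transversal_on opP (full (X:=SubT)) (img iP).
Proof.
  split; [intros; exact I | split; [split; [split|] | ]].
  - intros x y [a Ha] [b Hb]. exists (opZ a b). subst. apply sig_eq. reflexivity.
  - intros x y z _ _ _; apply sig_eq; simpl; apply asc.
  - intros x [a Ha]. exists (iP (zP x)). split.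
    + split; [exists (zP x); reflexivity | apply sub_inv].
    + intros y [[b Hb] Hinv]. subst y. f_equal. symmetry. apply sub_uniq. exact Hinv.
  - intros x _. exists (iP (zP x)). split.
    + split; [exists (zP x); reflexivity | apply sub_inv].
    + intros y [[b Hb] Hinv]. subst y. f_equal. symmetry. apply sub_uniq. exact Hinv.
Qed.

Lemma sub_qi : quasi_ideal_on opP (full (X:=SubT)) (img iP).
Proof.
  intros a x b [s Hs] _ [t Ht]. subst.
  exists (exist _ _ (Pq _ _ _ (proj2_sig s) (proj2_sig x) (proj2_sig t))). apply sig_eq. reflexivity.
Qed.
End Sub.

Let PL := fun x => lam x = x.
Let PR := fun x => rho x = x.
Lemma qL s x t : S0 s -> PL x -> S0 t -> S0 (s ** x ** t).
Proof. unfold PL; intros. rewrite (b_sL s x); auto. Qed.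
Lemma qR s x t : S0 s -> PR x -> S0 t -> S0 (s ** x ** t).
Proof. unfold PR; intros. rewrite asc, (b_sR t x); auto. Qed.

Definition Lt := SubT PL.
Definition opL := opP PL b_lamL.
Definition iL := iP PL b_lamS0.
Definition zL := zP PL.
Definition Rt := SubT PR.
Definition opR := opP PR b_rhoR.
Definition iR := iP PR b_rhoS0.
Definition zR := zP PR.
Definition star (a : Rt) (x : Lt) : Zt := exist _ (proj1_sig a ** proj1_sig x) (b_RL _ _ (proj2_sig a) (proj2_sig x)).
Definition phi (x : S) : Lt * Rt := (exist PL (lam x) (b_lamlam x), exist PR (rho x) (b_rhorho x)).

Lemma build_cd : construction_data opL opR opZ iL iR zL zR star.
Proof.
  split; [exact Z_inv |].
  split.
  { split; [exact (proj1 (sub_sg PL b_lamL b_lamS0)) | split; [exact (proj2 (sub_sg PL b_lamL b_lamS0)) |]].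
    intros e f He Hf. unfold idem in *. apply (f_equal (@proj1_sig _ _)) in He, Hf. simpl in He, Hf.
    destruct (b_LRB _ _ (proj2_sig e) (proj2_sig f) He Hf) as [A B]. split; apply sig_eq; simpl; assumption. }
  split.
  { split; [exact (proj1 (sub_sg PR b_rhoR b_rhoS0)) | split; [exact (proj2 (sub_sg PR b_rhoR b_rhoS0)) |]].
    intros e f He Hf. unfold idem in *. apply (f_equal (@proj1_sig _ _)) in He, Hf. simpl in He, Hf.
    destruct (b_RRB _ _ (proj2_sig e) (proj2_sig f) He Hf) as [A B]. split; apply sig_eq; simpl; assumption. }
  split; [apply sub_emb |].
  split; [apply sub_emb |].
  split; [apply sub_it |].
  split; [apply sub_qi; exact qL |].
  split; [apply sub_it |].
  split; [apply sub_qi; exact qR |].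
  split; [apply sub_inv |].
  split; [apply sub_inv |].
  split.
  { intros y z a b Hyb. apply (f_equal (@proj1_sig _ _)) in Hyb. simpl in Hyb.
    apply sig_eq; simpl. rewrite Hyb, !asc. reflexivity. }
  split; [intros; apply sig_eq; reflexivity |].
  split; [intros; apply sig_eq; reflexivity |].
  intros e f He Hf. unfold idem in *. apply (f_equal (@proj1_sig _ _)) in He, Hf. simpl in He, Hf.
  apply sig_eq; simpl. apply (b_ER_EL _ _ (proj2_sig e) He (proj2_sig f) Hf).
Qed.

Lemma build_iso : iso_onto op (Tmul opL opR iL iR zL zR star) (Tset zL zR).
Proof.
  exists phi. split; [split|split].
  - intros a b H. unfold phi in H. injection H as H1 H2.
    rewrite (b_decomp a), (b_decomp b). rewrite <- (b_olam a), <- (b_olam b), H1, H2. reflexivity.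
  - intros a b. unfold Tmul, phi. f_equal; apply sig_eq; simpl.
    + rewrite asc. symmetry. apply b_hom1.
    + symmetry. apply b_hom2.
  - intros a. unfold Tset, phi. simpl. apply sig_eq; simpl. rewrite b_olam, b_orho. reflexivity.
  - intros [l r] H. unfold Tset in H. simpl in H. apply (f_equal (@proj1_sig _ _)) in H. simpl in H.
    destruct (b_surj _ _ (proj2_sig l) (proj2_sig r) H) as [A B].
    exists (proj1_sig l ** (o (proj1_sig l) ** proj1_sig r)). unfold phi. f_equal; apply sig_eq; simpl; assumption.
Qed.
End Build.

Lemma part2 : forall (S : Type) (opS : S -> S -> S) (S0 : S -> Prop),
   semigroup_on opS (full (X:=S)) -> regular_on opS (full (X:=S)) ->
   inverse_transversal_on opS (full (X:=S)) S0 ->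
   multiplicative_on opS (full (X:=S)) S0 ->
   exists (L R Z : Type) (opL : L -> L -> L) (opR : R -> R -> R)
     (opZ : Z -> Z -> Z) (iL : Z -> L) (iR : Z -> R) (zL : L -> Z)
     (zR : R -> Z) (star : R -> L -> Z),
     construction_data opL opR opZ iL iR zL zR star /\
     iso_onto opS (Tmul opL opR iL iR zL zR star) (Tset zL zR).
Proof.
  intros S op S0 [_ Has] _ [_ [[[Hcl _] _] Hu]] Hm.
  assert (asc : forall x y z, op (op x y) z = op x (op y z)) by (intros; apply Has; exact I).
  assert (S0cl : forall x y, S0 x -> S0 y -> S0 (op x y)) by (intros; apply Hcl; auto).
  assert (Ho : {o : S -> S | forall x, (S0 (o x) /\ inverse_of op x (o x)) /\
                 forall y, S0 y /\ inverse_of op x y -> o x = y}).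
  { exists (fun x => proj1_sig (constructive_indefinite_description _ (Hu x I))).
    intro x. exact (proj2_sig (constructive_indefinite_description _ (Hu x I))). }
  destruct Ho as [o Ho].
  assert (oS0 : forall x, S0 (o x)) by (intro x; apply (Ho x)).
  assert (ol : forall x, op x (op (o x) x) = x) by (intro x; rewrite <- asc; apply (Ho x)).
  assert (or : forall x, op (o x) (op x (o x)) = o x) by (intro x; rewrite <- asc; apply (Ho x)).
  assert (ou : forall x y, S0 y -> op x (op y x) = x -> op y (op x y) = y -> y = o x).
  { intros x y Hy H1 H2. symmetry. apply (Ho x). split; [exact Hy | split; rewrite asc; auto]. }
  assert (mult : forall x y, S0 (op (o x) (op x (op y (o y))))).
  { intros x y. destruct (Hm x y (o x) (o y) I I (oS0 x) (oS0 y) (proj2 (proj1 (Ho x))) (proj2 (proj1 (Ho y)))) as [A _].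
    rewrite !asc in A. exact A. }
  assert (multi : forall x y, op (op (o x) (op x (op y (o y)))) (op (o x) (op x (op y (o y)))) = op (o x) (op x (op y (o y)))).
  { intros x y. destruct (Hm x y (o x) (o y) I I (oS0 x) (oS0 y) (proj2 (proj1 (Ho x))) (proj2 (proj1 (Ho y)))) as [_ A].
    unfold idem in A. rewrite !asc in A. rewrite !asc. exact A. }
  assert (CD := build_cd S op S0 o).
  assert (IS := build_iso S op S0 o).
  repeat (specialize (CD ltac:(first [exact asc | exact S0cl | exact oS0 | exact ol | exact or | exact ou | exact mult | exact multi]))).
  repeat (specialize (IS ltac:(first [exact asc | exact S0cl | exact oS0 | exact ol | exact or | exact ou | exact mult | exact multi]))).
  do 11 eexists. split; [exact CD | exact IS].
Qed.


Section Side.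
Variables (Z L : Type) (opZ : Z -> Z -> Z) (inv : Z -> Z) (opL : L -> L -> L) (iL : Z -> L) (zL : L -> Z).
Local Infix "⋅" := opZ (at level 40, left associativity).
Local Infix "**" := opL (at level 40, left associativity).
Hypothesis ascZ : forall x y z, (x ⋅ y) ⋅ z = x ⋅ (y ⋅ z).
Hypothesis Zl : forall s, s ⋅ (inv s ⋅ s) = s.
Hypothesis Zr : forall s, inv s ⋅ (s ⋅ inv s) = inv s.
Hypothesis Zu : forall s t, s ⋅ (t ⋅ s) = s -> t ⋅ (s ⋅ t) = t -> t = inv s.
Hypothesis ascL : forall x y z, (x ** y) ** z = x ** (y ** z).
Hypothesis LRB : forall e f, e ** e = e -> f ** f = f -> (e ** f) ** (e ** f) = e ** f /\ (e ** f) ** e = e ** f.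
Hypothesis iLh : forall s t, iL (s ⋅ t) = iL s ** iL t.
Hypothesis iLi : forall s t, iL s = iL t -> s = t.
Hypothesis zl : forall x, x ** (iL (zL x) ** x) = x.
Hypothesis zr : forall x, iL (zL x) ** (x ** iL (zL x)) = iL (zL x).
Hypothesis zu : forall x t, x ** (iL t ** x) = x -> iL t ** (x ** iL t) = iL t -> t = zL x.
Hypothesis qi : forall s x t, exists u, iL s ** (x ** iL t) = iL u.

Let C := fun _ : Z => True.
Lemma Zinvinv s : inv (inv s) = s.
Proof. apply (inv_inv Z opZ C inv); unfold C; auto. Qed.
Lemma Zcomm e f : e ⋅ e = e -> f ⋅ f = f -> e ⋅ f = f ⋅ e.
Proof. intros; apply (idem_comm Z opZ C inv); unfold C; auto. Qed.
Lemma Zinvmul s t : inv (s ⋅ t) = inv t ⋅ inv s.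
Proof. apply (inv_mul Z opZ C inv); unfold C; auto. Qed.
Lemma Zinvidem e : e ⋅ e = e -> inv e = e.
Proof. intros; apply (inv_idem Z opZ C inv); unfold C; auto. Qed.
Lemma Zidl s : (s ⋅ inv s) ⋅ (s ⋅ inv s) = s ⋅ inv s.
Proof. apply (idem_l Z opZ C inv); unfold C; auto. Qed.
Lemma Zidr s : (inv s ⋅ s) ⋅ (inv s ⋅ s) = inv s ⋅ s.
Proof. apply (idem_r Z opZ C inv); unfold C; auto. Qed.
Lemma Zlt s t : s ⋅ (inv s ⋅ (s ⋅ t)) = s ⋅ t.
Proof. rewrite <- (ascZ (inv s)), <- ascZ, Zl. reflexivity. Qed.
Lemma Zrt s t : inv s ⋅ (s ⋅ (inv s ⋅ t)) = inv s ⋅ t.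
Proof. rewrite <- (ascZ s), <- ascZ, Zr. reflexivity. Qed.

Lemma iLht s t x : iL s ** (iL t ** x) = iL (s ⋅ t) ** x.
Proof. rewrite iLh, ascL. reflexivity. Qed.

Lemma zlt x y : x ** (iL (zL x) ** (x ** y)) = x ** y.
Proof. rewrite <- (ascL (iL (zL x))), <- ascL, zl. reflexivity. Qed.
Lemma zrt x y : iL (zL x) ** (x ** (iL (zL x) ** y)) = iL (zL x) ** y.
Proof. rewrite <- (ascL x), <- ascL, zr. reflexivity. Qed.

Lemma A1 t : zL (iL t) = inv t.
Proof.
  symmetry. apply zu.
  - rewrite <- !iLh, Zl. reflexivity.
  - rewrite <- !iLh, Zr. reflexivity.
Qed.

Lemma A2 x : iL (zL x) ** x = iL (zL x ⋅ inv (zL x)).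
Proof.
  set (g := zL x). set (e := iL g ** x). set (f := iL (g ⋅ inv g)).
  assert (Hee : e ** e = e) by (unfold e, g; rewrite ascL, zl; reflexivity).
  assert (Hff : f ** f = f) by (unfold f; rewrite <- iLh, Zidl; reflexivity).
  assert (Eef : e ** f = f) by (unfold e, f, g; rewrite ascL, iLh, zrt, <- iLh; reflexivity).
  assert (Efe : f ** e = e) by (unfold e, f; rewrite <- ascL, <- iLh, ascZ, Zl; reflexivity).
  destruct (LRB e f Hee Hff) as [_ H]. rewrite Eef, Efe in H. exact H.
Qed.

Lemma A3 t x : iL t ** x = iL (t ⋅ inv (zL x)).
Proof.
  set (g := zL x). set (h := inv g ⋅ g).
  assert (Ih : h ⋅ h = h) by (unfold h; apply Zidr).
  assert (Ii : (x ** iL g) ** (x ** iL g) = x ** iL g) by (unfold g; rewrite ascL, zlt; reflexivity).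
  assert (ih : (x ** iL g) ** iL h = x ** iL g).
  { unfold h. rewrite ascL, <- iLh, Zl. reflexivity. }
  assert (hi : iL h ** (x ** iL g) = iL h).
  { unfold h. rewrite iLh, ascL. unfold g. rewrite zr. rewrite <- iLh. reflexivity. }
  assert (Sb : forall f, f ⋅ f = f -> iL f ** (x ** iL g) = iL (f ⋅ h)).
  { intros f Hf. destruct (qi f x g) as [k Hk].
    assert (If : iL f ** iL f = iL f) by (rewrite <- iLh, Hf; reflexivity).
    assert (Ik : k ⋅ k = k).
    { apply iLi. rewrite iLh, <- Hk. apply (LRB _ _ If Ii). }
    assert (kh : k ⋅ h = k).
    { apply iLi. rewrite iLh, <- Hk, ascL, ih. reflexivity. }
    assert (hk : h ⋅ k = f ⋅ h).
    { apply iLi. rewrite iLh, <- Hk, <- ascL, <- iLh, (Zcomm h f); auto. rewrite iLh, ascL, hi, <- iLh. reflexivity. }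
    rewrite Hk. f_equal. rewrite <- hk, (Zcomm h k); auto. }
  assert (Sc : iL t ** (x ** iL g) = iL (t ⋅ h)).
  { rewrite <- (Zl t) at 1. rewrite iLh, ascL, Sb. rewrite <- iLh. rewrite <- ascZ, Zl. reflexivity.
    apply Zidr. }
  rewrite <- (zl x) at 1. fold g. rewrite <- (ascL x (iL g) x), <- (ascL (iL t)), Sc.
  unfold h. rewrite <- ascZ, iLh, ascL. unfold g. rewrite A2, <- iLh, !ascZ, Zr. reflexivity.
Qed.

Lemma A4 x : x ** iL (zL x ⋅ inv (zL x)) = x.
Proof. rewrite <- A2. apply zl. Qed.

Lemma A5 x q : zL (x ** iL (zL x ⋅ q)) = inv (zL x ⋅ q) ⋅ zL x.
Proof.
  set (g := zL x). symmetry. apply zu; rewrite !ascL.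
  - rewrite iLht. rewrite <- (ascL (iL _) x), A3. fold g. rewrite <- iLh. f_equal. f_equal.
    rewrite !ascZ. rewrite Zlt. assert (E := Zl (g ⋅ q)). rewrite !ascZ in E. exact E.
  - rewrite <- (ascL (iL _) x), A3. fold g. rewrite <- !iLh. f_equal.
    rewrite !ascZ. rewrite Zlt. assert (E := Zrt (g ⋅ q) g). rewrite !ascZ in E. exact E.
Qed.
End Side.


Section P1.
Variables (L R Z : Type) (opL : L -> L -> L) (opR : R -> R -> R) (opZ : Z -> Z -> Z)
  (iL : Z -> L) (iR : Z -> R) (zL : L -> Z) (zR : R -> Z) (star : R -> L -> Z) (inv : Z -> Z).
Local Infix "⋅" := opZ (at level 40, left associativity).
Local Infix "**" := opL (at level 40, left associativity).
Local Infix "%%" := opR (at level 40, left associativity).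
Hypothesis ascZ : forall x y z, (x ⋅ y) ⋅ z = x ⋅ (y ⋅ z).
Hypothesis Zl : forall s, s ⋅ (inv s ⋅ s) = s.
Hypothesis Zr : forall s, inv s ⋅ (s ⋅ inv s) = inv s.
Hypothesis Zu : forall s t, s ⋅ (t ⋅ s) = s -> t ⋅ (s ⋅ t) = t -> t = inv s.
Hypothesis ascL : forall x y z, (x ** y) ** z = x ** (y ** z).
Hypothesis LRB : forall e f, e ** e = e -> f ** f = f -> (e ** f) ** (e ** f) = e ** f /\ (e ** f) ** e = e ** f.
Hypothesis iLh : forall s t, iL (s ⋅ t) = iL s ** iL t.
Hypothesis iLi : forall s t, iL s = iL t -> s = t.
Hypothesis zl : forall x, x ** (iL (zL x) ** x) = x.
Hypothesis zr : forall x, iL (zL x) ** (x ** iL (zL x)) = iL (zL x).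
Hypothesis zu : forall x t, x ** (iL t ** x) = x -> iL t ** (x ** iL t) = iL t -> t = zL x.
Hypothesis qiL : forall s x t, exists u, iL s ** (x ** iL t) = iL u.
Hypothesis ascR : forall x y z, (x %% y) %% z = x %% (y %% z).
Hypothesis RRB : forall e f, e %% e = e -> f %% f = f -> (e %% f) %% (e %% f) = e %% f /\ (e %% f) %% e = f %% e.
Hypothesis iRh : forall s t, iR (s ⋅ t) = iR s %% iR t.
Hypothesis iRi : forall s t, iR s = iR t -> s = t.
Hypothesis zRl : forall x, x %% (iR (zR x) %% x) = x.
Hypothesis zRr : forall x, iR (zR x) %% (x %% iR (zR x)) = iR (zR x).
Hypothesis zRu : forall x t, x %% (iR t %% x) = x -> iR t %% (x %% iR t) = iR t -> t = zR x.
Hypothesis qiR : forall s x t, exists u, iR s %% (x %% iR t) = iR u.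
Hypothesis H1 : forall y z a b, zL y = zR b ->
  star ((iR (star a y)) %% ((iR (zR b)) %% b)) z = star a ((y ** iL (zL y)) ** iL (star b z)).
Hypothesis H2a : forall s x, iL (star (iR s) x) = iL s ** x.
Hypothesis H2b : forall a t, iR (star a (iL t)) = a %% iR t.
Hypothesis H3 : forall e f, e %% e = e -> f ** f = f -> star e f ⋅ star e f = star e f.

Local Notation opZ' := (fun a b => opZ b a).
Local Notation opR' := (fun a b => opR b a).
Lemma ascZ' : forall x y z, opZ' (opZ' x y) z = opZ' x (opZ' y z).
Proof. intros; simpl; symmetry; apply ascZ. Qed.
Lemma Zl' : forall s, opZ' s (opZ' (inv s) s) = s.
Proof. intros; simpl; rewrite ascZ; auto. Qed.
Lemma Zr' : forall s, opZ' (inv s) (opZ' s (inv s)) = inv s.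
Proof. intros; simpl; rewrite ascZ; auto. Qed.
Lemma Zu' : forall s t, opZ' s (opZ' t s) = s -> opZ' t (opZ' s t) = t -> t = inv s.
Proof. simpl; intros. apply Zu; rewrite <- ascZ; auto. Qed.
Lemma ascR' : forall x y z, opR' (opR' x y) z = opR' x (opR' y z).
Proof. intros; simpl; symmetry; apply ascR. Qed.
Lemma RRB' : forall e f, opR' e e = e -> opR' f f = f -> opR' (opR' e f) (opR' e f) = opR' e f /\ opR' (opR' e f) e = opR' e f.
Proof. simpl; intros e f He Hf. split. exact (proj1 (RRB f e Hf He)). rewrite <- ascR. exact (proj2 (RRB e f He Hf)). Qed.
Lemma iRh' : forall s t, iR (opZ' s t) = opR' (iR s) (iR t).
Proof. simpl; intros; apply iRh. Qed.
Lemma zRl' : forall x, opR' x (opR' (iR (zR x)) x) = x.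
Proof. simpl; intros; rewrite ascR; auto. Qed.
Lemma zRr' : forall x, opR' (iR (zR x)) (opR' x (iR (zR x))) = iR (zR x).
Proof. simpl; intros; rewrite ascR; auto. Qed.
Lemma zRu' : forall x t, opR' x (opR' (iR t) x) = x -> opR' (iR t) (opR' x (iR t)) = iR t -> t = zR x.
Proof. simpl; intros. apply zRu; rewrite <- ascR; auto. Qed.
Lemma qiR' : forall s x t, exists u, opR' (iR s) (opR' x (iR t)) = iR u.
Proof. simpl; intros s x t. destruct (qiR t x s) as [u Hu]. exists u. rewrite ascR; auto. Qed.

Ltac fL H := repeat (specialize (H ltac:(first [exact ascZ | exact Zl | exact Zr | exact Zu | exact ascL | exact LRB | exact iLh | exact iLi | exact zl | exact zr | exact zu | exact qiL]))).
Ltac fR H := repeat (specialize (H ltac:(first [exact ascZ' | exact Zl' | exact Zr' | exact Zu' | exact ascR' | exact RRB' | exact iRh' | exact iRi | exact zRl' | exact zRr' | exact zRu' | exact qiR']))).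
Ltac uL Lm := let H := fresh in assert (H := Lm Z L opZ inv opL iL zL); fL H; intros; cbv beta in H; eapply H; eauto.
Ltac uZ Lm := let H := fresh in assert (H := Lm Z opZ inv); fL H; intros; eapply H; eauto.
Ltac uR Lm := let H := fresh in assert (H := Lm Z R opZ' inv opR' iR zR); fR H; intros; cbv beta in H; eapply H; eauto.

Lemma LA1 t : zL (iL t) = inv t. Proof. uL A1. Qed.
Lemma LA2 x : iL (zL x) ** x = iL (zL x ⋅ inv (zL x)). Proof. uL A2. Qed.
Lemma LA3 t x : iL t ** x = iL (t ⋅ inv (zL x)). Proof. uL A3. Qed.
Lemma LA4 x : x ** iL (zL x ⋅ inv (zL x)) = x. Proof. uL A4. Qed.
Lemma LA5 x q : zL (x ** iL (zL x ⋅ q)) = inv (zL x ⋅ q) ⋅ zL x. Proof. uL A5. Qed.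
Lemma RA1 t : zR (iR t) = inv t. Proof. uR A1. Qed.
Lemma RA2 x : x %% iR (zR x) = iR (inv (zR x) ⋅ zR x). Proof. uR A2. Qed.
Lemma RA3 t x : x %% iR t = iR (inv (zR x) ⋅ t). Proof. uR A3. Qed.
Lemma RA4 x : iR (inv (zR x) ⋅ zR x) %% x = x. Proof. uR A4. Qed.
Lemma RA5 x q : zR (iR (q ⋅ zR x) %% x) = zR x ⋅ inv (q ⋅ zR x). Proof. uR A5. Qed.
Lemma Zinvinv' s : inv (inv s) = s. Proof. uZ Zinvinv. Qed.
Lemma Zcomm' e f : e ⋅ e = e -> f ⋅ f = f -> e ⋅ f = f ⋅ e. Proof. uZ Zcomm. Qed.
Lemma Zinvmul' s t : inv (s ⋅ t) = inv t ⋅ inv s. Proof. uZ Zinvmul. Qed.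
Lemma Zinvidem' e : e ⋅ e = e -> inv e = e. Proof. uZ Zinvidem. Qed.
Lemma Zidl' s : (s ⋅ inv s) ⋅ (s ⋅ inv s) = s ⋅ inv s. Proof. uZ Zidl. Qed.
Lemma Zidr' s : (inv s ⋅ s) ⋅ (inv s ⋅ s) = inv s ⋅ s. Proof. uZ Zidr. Qed.
Lemma Zlt' s t : s ⋅ (inv s ⋅ (s ⋅ t)) = s ⋅ t. Proof. uZ Zlt. Qed.
Lemma Zrt' s t : inv s ⋅ (s ⋅ (inv s ⋅ t)) = inv s ⋅ t. Proof. uZ Zrt. Qed.

Lemma B0 s t : star (iR s) (iL t) = s ⋅ t.
Proof. apply iLi. rewrite H2a, iLh. reflexivity. Qed.
Lemma B4 s x : star (iR s) x = s ⋅ inv (zL x).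
Proof. apply iLi. rewrite H2a, LA3. reflexivity. Qed.
Lemma B3 a t : star a (iL t) = inv (zR a) ⋅ t.
Proof. apply iRi. rewrite H2b, RA3. reflexivity. Qed.

Lemma B1pre t a z : star (iR (t ⋅ (inv (zR a) ⋅ zR a)) %% a) z = t ⋅ (inv (zR a) ⋅ (zR a ⋅ star a z)).
Proof.
  set (g := zR a).
  assert (P : zL (iL (inv g)) = zR a) by (rewrite LA1, Zinvinv'; reflexivity).
  assert (E := H1 (iL (inv g)) z (iR t) a P).
  apply (f_equal iL) in E. rewrite H2a in E. rewrite B0, LA1, Zinvinv' in E. fold g in E.
  rewrite <- ascR, <- iRh in E. rewrite ascZ in E. apply iLi. rewrite E. rewrite ascL, <- !iLh. reflexivity.
Qed.

Lemma B5a a z : star a z = inv (zR a) ⋅ (zR a ⋅ star a z).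
Proof.
  rewrite <- (RA4 a) at 1. rewrite <- (Zidr' (zR a)). rewrite B1pre. rewrite !ascZ, Zrt'. reflexivity.
Qed.

Lemma B1 t a z : star (iR t %% a) z = t ⋅ star a z.
Proof.
  rewrite <- (RA4 a) at 1. rewrite <- ascR, <- iRh. rewrite B1pre. rewrite <- B5a. reflexivity.
Qed.

Lemma B2pre a y t : star a (y ** iL (zL y ⋅ (inv (zL y) ⋅ t))) = star a y ⋅ (zL y ⋅ (inv (zL y) ⋅ t)).
Proof.
  set (h := zL y).
  assert (P : zL y = zR (iR (inv h))) by (rewrite RA1, Zinvinv'; reflexivity).
  assert (E := H1 y (iL t) a (iR (inv h)) P).
  rewrite RA1, Zinvinv' in E. fold h in E. rewrite <- iRh, <- iRh, B0, B0 in E.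
  rewrite ascL, <- iLh in E. rewrite !ascZ in E. symmetry. exact E.
Qed.

Lemma B5b a y : star a y = star a y ⋅ (zL y ⋅ inv (zL y)).
Proof.
  rewrite <- (LA4 y) at 1. rewrite <- (Zr (zL y)). rewrite B2pre. rewrite Zr. reflexivity.
Qed.

Lemma B2 a y t : star a (y ** iL t) = star a y ⋅ t.
Proof.
  rewrite <- (LA4 y) at 1. rewrite ascL, <- iLh, ascZ. rewrite B2pre.
  rewrite (B5b a y) at 2. rewrite !ascZ. reflexivity.
Qed.

Local Notation mul := (Tmul opL opR iL iR zL zR star).
Local Notation T := (Tset zL zR).
Definition fZ (s : Z) : L * R := (iL s, iR s).

Lemma TM x a y b : mul (x, a) (y, b) = (x ** iL (zL x ⋅ star a y), iR (star a y ⋅ zR b) %% b).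
Proof. unfold Tmul. rewrite ascL, <- iLh, <- ascR, <- iRh. reflexivity. Qed.

Lemma C1 x a y : zL x = zR a -> zL (x ** iL (zL x ⋅ star a y)) = inv (star a y).
Proof.
  intro Hxa. rewrite LA5, Zinvmul', ascZ.
  assert (E := f_equal inv (B5a a y)). rewrite <- ascZ, Zinvmul', (Zinvidem' _ (Zidr' _)) in E.
  rewrite Hxa. symmetry. exact E.
Qed.

Lemma C2 a y b : zL y = zR b -> zR (iR (star a y ⋅ zR b) %% b) = inv (star a y).
Proof.
  intro Hyb. rewrite RA5, Zinvmul', <- ascZ.
  assert (E := f_equal inv (B5b a y)). rewrite Zinvmul', (Zinvidem' _ (Zidl' _)) in E.
  rewrite <- Hyb. symmetry. exact E.
Qed.

Lemma Tcl p q : T p -> T q -> T (mul p q).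
Proof.
  destruct p as [x a], q as [y b]. intros Hp Hq. unfold Tset in Hp, Hq; simpl in Hp, Hq.
  rewrite TM. unfold Tset; simpl. rewrite C1, C2; auto.
Qed.

Lemma Tassoc p q r : T p -> T q -> T r -> mul (mul p q) r = mul p (mul q r).
Proof.
  destruct p as [x a], q as [y b], r as [z c]. intros Hp Hq Hr. unfold Tset in Hp, Hq, Hr; simpl in Hp, Hq, Hr.
  rewrite !TM. rewrite C1, C2; auto. rewrite B1, B2. rewrite Hq.
  f_equal.
  - rewrite ascL, <- iLh. f_equal. f_equal. rewrite !ascZ. rewrite Zlt'. reflexivity.
  - rewrite <- ascR, <- iRh. f_equal. f_equal. rewrite !ascZ. rewrite Zlt'. reflexivity.
Qed.

Lemma F0 s : T (fZ s).
Proof. unfold Tset, fZ; simpl. rewrite LA1, RA1. reflexivity. Qed.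

Lemma Fhom s t : mul (fZ s) (fZ t) = fZ (s ⋅ t).
Proof.
  unfold fZ. rewrite TM, LA1, RA1, B0, <- iLh, <- iRh. f_equal; f_equal.
  - apply Zlt'.
  - rewrite !ascZ, Zl. reflexivity.
Qed.

Lemma E1 x a s : zL x = zR a -> mul (x, a) (fZ s) = (x ** iL (zL x ⋅ (inv (zL x) ⋅ s)), iR (inv (zL x) ⋅ s)).
Proof.
  intro H. unfold fZ. rewrite TM, B3, RA1, <- iRh, H. f_equal. f_equal. rewrite !ascZ, Zl. reflexivity.
Qed.

Lemma E2 x a s : zL x = zR a -> mul (fZ s) (x, a) = (iL (s ⋅ inv (zL x)), iR (s ⋅ (inv (zL x) ⋅ zL x)) %% a).
Proof.
  intro H. unfold fZ. rewrite TM, B4, LA1, <- iLh, Zlt', H. f_equal. f_equal. rewrite ascZ. reflexivity.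
Qed.

Lemma P0 x a : zL x = zR a -> inverse_of mul (x, a) (fZ (zL x)).
Proof.
  intro H. set (g := zL x). split.
  - rewrite E1; auto. fold g. rewrite Zl. rewrite TM.
    assert (Ez : zL (x ** iL g) = inv g ⋅ g).
    { rewrite <- (Zl g) at 1. unfold g. rewrite LA5. fold g. rewrite Zl. reflexivity. }
    rewrite Ez, B4. fold g. f_equal.
    + rewrite ascL, <- iLh. rewrite !ascZ, Zlt', Zlt'. unfold g. apply LA4.
    + rewrite !ascZ, Zrt'. unfold g. rewrite H. apply RA4.
  - rewrite E2; auto. fold g. rewrite Zl. unfold fZ. rewrite TM, LA1, B1, B3, RA1, <- H. fold g. rewrite (Zinvidem' _ (Zidl' g)), Zl. rewrite <- iLh, <- iRh. f_equal; f_equal; rewrite !ascZ; rewrite ?Zlt'; apply Zl.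
Qed.

Lemma P1u x a s : zL x = zR a -> inverse_of mul (x, a) (fZ s) -> s = zL x.
Proof.
  intros H [HA HB]. set (g := zL x).
  rewrite E1 in HA; auto. rewrite TM in HA. apply (f_equal snd) in HA. simpl in HA.
  rewrite B4 in HA. fold g in HA.
  apply (f_equal (fun r => r %% iR g)) in HA. rewrite ascR in HA. unfold g in HA. rewrite H, (RA3 (zR a) a) in HA.
  rewrite <- iRh in HA. apply iRi in HA. rewrite <- H in HA. fold g in HA.
  rewrite !ascZ in HA. rewrite Zrt' in HA.
  apply (f_equal (fun z => z ⋅ inv g)) in HA. rewrite !ascZ in HA. rewrite (Zr g) in HA.
  rewrite E2 in HB; auto. unfold fZ in HB. rewrite TM in HB. apply (f_equal fst) in HB. simpl in HB.
  rewrite LA1, B1, B3, <- iLh in HB. apply iLi in HB. rewrite <- H in HB. fold g in HB.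
  assert (E := Zlt' (s ⋅ inv g) (g ⋅ (inv g ⋅ s))).  
  rewrite !ascZ in E. rewrite !ascZ in HB. rewrite E, Zrt' in HB.
  rewrite (Zu (inv g) s HA HB). apply Zinvinv'.
Qed.

Lemma Mult x a y b : zL x = zR a -> zL y = zR b ->
  mul (mul (fZ (zL x)) (x, a)) (mul (y, b) (fZ (zL y))) = fZ (zL x ⋅ (star a y ⋅ zL y)) /\
  mul (fZ (zL x ⋅ (star a y ⋅ zL y))) (fZ (zL x ⋅ (star a y ⋅ zL y))) = fZ (zL x ⋅ (star a y ⋅ zL y)).
Proof.
  intros Ha Hb. set (g := zL x). set (h := zL y).
  assert (Ik : (g ⋅ (star a y ⋅ h)) ⋅ (g ⋅ (star a y ⋅ h)) = g ⋅ (star a y ⋅ h)).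
  { assert (Ie : (iR g %% a) %% (iR g %% a) = iR g %% a).
    { unfold g; rewrite Ha. rewrite !ascR, <- (ascR a), RA3, RA4. reflexivity. }
    assert (If : (y ** iL h) ** (y ** iL h) = y ** iL h).
    { rewrite !ascL, <- (ascL (iL h)), LA3. fold h. rewrite <- iLh, ascZ, Zl. reflexivity. }
    assert (E := H3 _ _ Ie If). rewrite B1, B2 in E. rewrite !ascZ in E |- *. exact E. }
  split; [| rewrite Fhom, Ik; reflexivity].
  rewrite E2, E1; auto. fold g h. rewrite (Zl g), (Zl h). unfold fZ. rewrite TM.
  rewrite LA1, RA1, B1, B2, (Zinvidem' _ (Zidl' g)), (Zinvidem' _ (Zidr' h)), <- iLh, <- iRh.
  f_equal; f_equal; rewrite !ascZ.
  - rewrite !Zlt'. reflexivity.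
  - rewrite Zlt', Zl. reflexivity.
Qed.

Theorem p1main : semigroup_on mul T /\ regular_on mul T /\
   exists T0 : L * R -> Prop,
     inverse_transversal_on mul T T0 /\ multiplicative_on mul T T0 /\
     iso_onto opZ mul T0.
Proof.
  split; [split; [intros p q Hp Hq; apply Tcl; auto | intros p q r Hp Hq Hr; apply Tassoc; auto] |].
  split.
  { intros [x a] Hp. exists (fZ (zL x)). split; [apply F0 | apply (proj1 (P0 x a Hp))]. }
  exists (fun p => exists s, p = fZ s).
  split.
  { split; [|split; [split; [split|] |]].
  - intros p [s ->]; apply F0.
  - intros p q [s ->] [t ->]; exists (s ⋅ t); apply Fhom.
  - intros p q r [s ->] [t ->] [u ->]; rewrite !Fhom, ascZ; reflexivity.
  - intros p [s ->]. exists (fZ (inv s)). split.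
    + split; [exists (inv s); reflexivity | split; rewrite !Fhom; f_equal; rewrite ascZ; auto].
    + intros q [[t ->] [HA HB]]. rewrite !Fhom in HA, HB. unfold fZ in HA, HB.
      injection HA as HA _. injection HB as HB _. apply iLi in HA. apply iLi in HB.
      rewrite ascZ in HA, HB. rewrite (Zu s t HA HB). reflexivity.
  - intros [x a] Hp. exists (fZ (zL x)). split.
    + split; [exists (zL x); reflexivity | apply P0; auto].
    + intros q [[s ->] Hi]. rewrite (P1u x a s Hp Hi). reflexivity.
  }
  split.
    + intros [x a] [y b] p0 q0 Hp Hq [s ->] [t ->] Hi1 Hi2.
      unfold Tset in Hp, Hq; simpl in Hp, Hq.
      rewrite (P1u x a s Hp Hi1), (P1u y b t Hq Hi2).
      destruct (Mult x a y b Hp Hq) as [M1 M2]. rewrite M1. split; [eexists; reflexivity | exact M2].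
    + exists fZ. split; [split|split].
      * intros s t E. unfold fZ in E. injection E as E1 E2. apply iLi; auto.
      * intros s t; symmetry; apply Fhom.
      * intros s; exists s; reflexivity.
      * intros p [s ->]; exists s; reflexivity.
Qed.
End P1.

Lemma part1 : forall (L R Z : Type) (opL : L -> L -> L) (opR : R -> R -> R)
     (opZ : Z -> Z -> Z) (iL : Z -> L) (iR : Z -> R) (zL : L -> Z)
     (zR : R -> Z) (star : R -> L -> Z),
   construction_data opL opR opZ iL iR zL zR star ->
   let T := Tset zL zR in
   let mul := Tmul opL opR iL iR zL zR star in
   semigroup_on mul T /\ regular_on mul T /\
   exists T0 : L * R -> Prop,
     inverse_transversal_on mul T T0 /\ multiplicative_on mul T T0 /\
     iso_onto opZ mul T0.
Proof.
  intros L R Z opL opR opZ iL iR zL zR star CD T mul.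
  destruct CD as (HZ & HLi & HRi & EL & ER & ITL & QL & ITR & QR & zLi & zRi & H1 & H2a & H2b & H3).
  destruct HZ as [[_ HaZ] HuZ].
  assert (ascZ : forall x y z, opZ (opZ x y) z = opZ x (opZ y z)) by (intros; apply HaZ; exact I).
  assert (Hi : {inv : Z -> Z | forall x, (True /\ inverse_of opZ x (inv x)) /\
                 forall y, True /\ inverse_of opZ x y -> inv x = y}).
  { exists (fun x => proj1_sig (constructive_indefinite_description _ (HuZ x I))).
    intro x. exact (proj2_sig (constructive_indefinite_description _ (HuZ x I))). }
  destruct Hi as [inv Hi].
  assert (Zl : forall s, opZ s (opZ (inv s) s) = s) by (intro s; rewrite <- ascZ; apply (Hi s)).
  assert (Zr : forall s, opZ (inv s) (opZ s (inv s)) = inv s) by (intro s; rewrite <- ascZ; apply (Hi s)).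
  assert (Zu : forall s t, opZ s (opZ t s) = s -> opZ t (opZ s t) = t -> t = inv s).
  { intros s t A B. symmetry. apply (Hi s). split; [exact I | split; rewrite ascZ; auto]. }
  destruct HLi as [[_ HaL] [_ LRB0]].
  assert (ascL : forall x y z, opL (opL x y) z = opL x (opL y z)) by (intros; apply HaL; exact I).
  assert (LRB : forall e f, opL e e = e -> opL f f = f -> opL (opL e f) (opL e f) = opL e f /\ opL (opL e f) e = opL e f)
    by (intros; apply LRB0; auto).
  destruct HRi as [[_ HaR] [_ RRB0]].
  assert (ascR : forall x y z, opR (opR x y) z = opR x (opR y z)) by (intros; apply HaR; exact I).
  assert (RRB : forall e f, opR e e = e -> opR f f = f -> opR (opR e f) (opR e f) = opR e f /\ opR (opR e f) e = opR f e)
    by (intros; apply RRB0; auto).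
  destruct EL as [iLi iLh]. destruct ER as [iRi iRh].
  assert (iLh' : forall s t, iL (opZ s t) = opL (iL s) (iL t)) by auto.
  assert (iRh' : forall s t, iR (opZ s t) = opR (iR s) (iR t)) by auto.
  assert (zl : forall x, opL x (opL (iL (zL x)) x) = x) by (intro x; rewrite <- ascL; apply (zLi x)).
  assert (zr : forall x, opL (iL (zL x)) (opL x (iL (zL x))) = iL (zL x)) by (intro x; rewrite <- ascL; apply (zLi x)).
  assert (zRl : forall x, opR x (opR (iR (zR x)) x) = x) by (intro x; rewrite <- ascR; apply (zRi x)).
  assert (zRr : forall x, opR (iR (zR x)) (opR x (iR (zR x))) = iR (zR x)) by (intro x; rewrite <- ascR; apply (zRi x)).
  destruct ITL as [_ [_ ITL]]. destruct ITR as [_ [_ ITR]].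
  assert (zu : forall x t, opL x (opL (iL t) x) = x -> opL (iL t) (opL x (iL t)) = iL t -> t = zL x).
  { intros x t A B. destruct (ITL x I) as [y [_ U]].
    assert (A' : opL (opL x (iL t)) x = x) by (rewrite ascL; exact A).
    assert (B' : opL (opL (iL t) x) (iL t) = iL t) by (rewrite ascL; exact B).
    assert (U1 := U (iL t) (conj (ex_intro _ t eq_refl) (conj A' B'))).
    assert (U2 := U (iL (zL x)) (conj (ex_intro _ (zL x) eq_refl) (zLi x))).
    apply iLi. congruence. }
  assert (zRu : forall x t, opR x (opR (iR t) x) = x -> opR (iR t) (opR x (iR t)) = iR t -> t = zR x).
  { intros x t A B. destruct (ITR x I) as [y [_ U]].
    assert (A' : opR (opR x (iR t)) x = x) by (rewrite ascR; exact A).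
    assert (B' : opR (opR (iR t) x) (iR t) = iR t) by (rewrite ascR; exact B).
    assert (U1 := U (iR t) (conj (ex_intro _ t eq_refl) (conj A' B'))).
    assert (U2 := U (iR (zR x)) (conj (ex_intro _ (zR x) eq_refl) (zRi x))).
    apply iRi. congruence. }
  assert (qiL : forall s x t, exists u, opL (iL s) (opL x (iL t)) = iL u).
  { intros s x t. destruct (QL (iL s) x (iL t) (ex_intro _ s eq_refl) I (ex_intro _ t eq_refl)) as [u Hu].
    exists u. rewrite Hu, ascL. reflexivity. }
  assert (qiR : forall s x t, exists u, opR (iR s) (opR x (iR t)) = iR u).
  { intros s x t. destruct (QR (iR s) x (iR t) (ex_intro _ s eq_refl) I (ex_intro _ t eq_refl)) as [u Hu].
    exists u. rewrite Hu, ascR. reflexivity. }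
  exact (p1main L R Z opL opR opZ iL iR zL zR star inv ascZ Zl Zr Zu ascL LRB iLh' iLi zl zr zu qiL
           ascR RRB iRh' iRi zRl zRr zRu qiR H1 H2a H2b H3).
Qed.

Theorem theorem4p4 :
  (forall (L R Z : Type) (opL : L -> L -> L) (opR : R -> R -> R)
     (opZ : Z -> Z -> Z) (iL : Z -> L) (iR : Z -> R) (zL : L -> Z)
     (zR : R -> Z) (star : R -> L -> Z),
   construction_data opL opR opZ iL iR zL zR star ->
   let T := Tset zL zR in
   let mul := Tmul opL opR iL iR zL zR star in
   semigroup_on mul T /\ regular_on mul T /\
   exists T0 : L * R -> Prop,
     inverse_transversal_on mul T T0 /\ multiplicative_on mul T T0 /\
     iso_onto opZ mul T0)
  /\
  (forall (S : Type) (opS : S -> S -> S) (S0 : S -> Prop),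
   semigroup_on opS (full (X:=S)) -> regular_on opS (full (X:=S)) ->
   inverse_transversal_on opS (full (X:=S)) S0 ->
   multiplicative_on opS (full (X:=S)) S0 ->
   exists (L R Z : Type) (opL : L -> L -> L) (opR : R -> R -> R)
     (opZ : Z -> Z -> Z) (iL : Z -> L) (iR : Z -> R) (zL : L -> Z)
     (zR : R -> Z) (star : R -> L -> Z),
     construction_data opL opR opZ iL iR zL zR star /\
     iso_onto opS (Tmul opL opR iL iR zL zR star) (Tset zL zR)).
Proof. split; [exact part1 | exact part2]. Qed.
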